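(* For every $n \geq 1$, the base change map $BC : \mathcal{A}_n^t(\mathbb{R}) \to \mathcal{A}_n^t(\mathbb{C})$ is a continuous proper map of locally compact Hausdorff spaces.
   Context: For $F = \mathbb{R}$ or $\mathbb{C}$, $\mathcal{A}_n^t(F)$ is the tempered dual of $GL(n,F)$, topologized via Harish-Chandra's parametrization as the disjoint union $\bigsqcup_{(M,\sigma)} X(M)/W_\sigma(M)$: here $M$ runs over standard (block-diagonal) Levi subgroups, ${}^0M \subset M$ is the subgroup where each diagonal block has determinant of absolute value $1$, $\sigma$ runs over representatives of $W(M)$-orbits of discrete series representations of ${}^0M$ ($W(M)=N(M)/M$), $W_\sigma(M)$ is the stabilizer of $\sigma$, and $X(M)$ is the group of unramified unitary characters of $M$ (those trivial on ${}^0M$); the point $\chi \in X(M)$ corresponds to the parabolically induced representation $i_{GL(n),MN}(\chi\sigma \otimes 1)$. Each $X(M)/W_\sigma(M)$ carries the quotient topology from $X(M) \cong \mathbb{R}^{m}$. For $F=\mathbb{R}$, Levi subgroups correspond to partitions $n = 2q+r$ into $q$ twos and $r$ ones, $M \cong GL(2,\mathbb{R})^q \times (\mathbb{R}^\times)^r$ and $X(M) \cong \mathbb{R}^{q+r}$ via $\mathrm{diag}(g_1,\dots,g_q,\omega_1,\dots,\omega_r)\mapsto \prod|\det g_i|^{it_i}\prod |\omega_j|^{it_{q+j}}$; for $F=\mathbb{C}$ only the diagonal torus $T\cong(\mathbb{C}^\times)^n$ contributes, with $X(T)\cong\mathbb{R}^n$. Base change $BC$ is the map of tempered duals corresponding,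 under the local Langlands correspondence, to restriction of L-parameters from the Weil group $W_{\mathbb{R}} = \mathbb{C}^\times \rtimes \mathbb{Z}/2\mathbb{Z}$ to $W_{\mathbb{C}} = \mathbb{C}^\times$. Explicitly, for unitary characters $\chi_1,\dots,\chi_q$ of $\mathbb{C}^\times$ with $\chi_i \neq \chi_i^\sigma$ (where $\chi^\sigma(z)=\chi(\bar z)$), each defining a discrete series representation $\pi(\chi_i)$ of $GL(2,\mathbb{R})$, and unitary characters $\xi_1,\dots,\xi_r$ of $\mathbb{R}^\times$, the generalized principal series $\pi = i_{GL(n,\mathbb{R}),MN}(\pi(\chi_1)\otimes\dots\otimes\pi(\chi_q)\otimes\xi_1\otimes\dots\otimes\xi_r\otimes 1)$ is sent to $BC(\pi) = i_{GL(n,\mathbb{C}),B(\mathbb{C})}(\chi_1,\chi_1^\sigma,\dots,\chi_q,\chi_q^\sigma,\xi_1\circ N,\dots,\xi_r\circ N)$, where $B(\mathbb{C})$ is the Borel subgroup and $N(z) = z\bar z$. For $n=1$, $BC(\chi) = \chi\circ N$. *)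

(* Defs.v *)
(* Encoding of the tempered duals of GL(n,R)
   and GL(n,C) via Harish-Chandra parametrization. *)
From HB Require Import structures.
From mathcomp Require Import all_boot all_order all_algebra all_fingroup.
From mathcomp Require Import all_classical all_reals all_analysis.
From mathcomp Require Import generic_quotient.
Set Implicit Arguments. Unset Strict Implicit. Unset Printing Implicit Defensive.
Import Order.TTheory GRing.Theory Num.Theory.
Import numFieldNormedType.Exports.
Local Open Scope classical_set_scope.
Local Open Scope ring_scope.
Local Open Scope quotient_scope.

Section Generic.
Variable R : realType.
Variable L : eqType.
Variable ls : seq L.
Local Notation m := (size ls).
Definition lab (i : 'I_m) : L := tnth (in_tuple ls) i.
Definition stab (s : 'S_m) : bool := [forall i, lab (s i) == lab i].
Definition perm_act (s : 'S_m) (t : 'rV[R]_m) : 'rV[R]_m := \row_i t ord0 (s i).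
Definition orbit_rel (t t' : 'rV[R]_m) : bool :=
  [exists s : 'S_m, stab s && (t' == perm_act s t)].

Lemma orbit_rel_refl : reflexive orbit_rel.
Proof.
move=> t; apply/existsP; exists 1%g; apply/andP; split.
  by apply/forallP => i; rewrite perm1.
by apply/eqP/matrixP => i j; rewrite !mxE perm1 (ord1 i).
Qed.

Lemma orbit_rel_sym : symmetric orbit_rel.
Proof.
suff H : forall t t', orbit_rel t t' -> orbit_rel t' t.
  by move=> t t'; apply/idP/idP; apply: H.
move=> t t' /existsP[s /andP[/forallP st /eqP ->]].
apply/existsP; exists s^-1%g; apply/andP; split.
  by apply/forallP => i; have := st (s^-1%g i); rewrite permKV => /eqP ->.
by apply/eqP/matrixP => i j; rewrite !mxE permKV (ord1 i).
Qed.

Lemma orbit_rel_trans : transitive orbit_rel.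
Proof.
move=> t2 t1 t3 /existsP[s1 /andP[/forallP st1 /eqP ->]]
  /existsP[s2 /andP[/forallP st2 /eqP ->]].
apply/existsP; exists (s2 * s1)%g; apply/andP; split.
  by apply/forallP => i; rewrite permM (eqP (st1 _)) (eqP (st2 _)).
by apply/eqP/matrixP => i j; rewrite !mxE permM.
Qed.

Definition orbit_equiv := EquivRel orbit_rel orbit_rel_refl orbit_rel_sym orbit_rel_trans.

Definition comp_space : topologicalType := quotient_topology {eq_quot orbit_equiv}.
End Generic.

Definition le_bool (a b : bool) : bool := (a <= b)%N.

Definition CR_pred (n : nat) (c : seq nat * seq bool) : bool :=
  [&& all (fun k => 2 <= k)%N c.1, sorted leq c.1, sorted le_bool c.2
    & ((size c.1).*2 + size c.2 == n)%N].

Definition CR (n : nat) := {c : seq nat * seq bool | CR_pred n c}.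

Definition labR (c : seq nat * seq bool) : seq (nat + bool) :=
  map inl c.1 ++ map inr c.2.

Definition TempR (R : realType) (n : nat) :=
  {c : CR n & comp_space R (labR (val c))}.

Definition le_int (a b : int) : bool := (a <= b)%R.

Definition CC_pred (n : nat) (ms : seq int) : bool :=
  sorted le_int ms && (size ms == n)%N.

Definition CC (n : nat) := {ms : seq int | CC_pred n ms}.

Definition TempC (R : realType) (n : nat) :=
  {c : CC n & comp_space R (val c)}.


Definition bc_labels (c : seq nat * seq bool) : seq int :=
  sort le_int (flatten [seq [:: Posz k.-1; - Posz k.-1] | k <- c.1]
               ++ nseq (size c.2) 0%Z).

Lemma size_flatten2 (T : Type) (f g : nat -> T) (s : seq nat) :
  size (flatten [seq [:: f k; g k] | k <- s]) = (size s).*2.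
Proof. by elim: s => //= k s IH; rewrite IH doubleS. Qed.

Lemma bc_labels_ok (n : nat) (c : seq nat * seq bool) :
  CR_pred n c -> CC_pred n (bc_labels c).
Proof.
case/and4P => _ _ _ /eqP Hn; apply/andP; split.
  by apply: sort_sorted => a b; exact: le_total.
rewrite size_sort size_cat size_nseq.
by rewrite (size_flatten2 (fun k => Posz k.-1) (fun k => - Posz k.-1)) Hn.
Qed.

Definition bc_index (n : nat) (c : CR n) : CC n :=
  exist _ (bc_labels (val c)) (bc_labels_ok (valP c)).

Definition bc_vector (R : realType) (n : nat) (c : CR n)
    (t : 'rV[R]_(size (labR (val c)))) : 'rV[R]_(size (val (bc_index c))) :=
  let ts := [seq t ord0 i | i <- enum 'I_(size (labR (val c)))] in
  let raw := flatten [seq [:: (Posz kt.1.-1, kt.2); (- Posz kt.1.-1, kt.2)]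
                     | kt <- zip (val c).1 ts]
             ++ [seq (0%Z, x) | x <- drop (size (val c).1) ts] in
  let srt := sort (fun p q : int * R => le_int p.1 q.1) raw in
  \row_j nth 0 (map snd srt) j.

Definition BC (R : realType) (n : nat) (p : TempR R n) : TempC R n :=
  let: existT c x := p in
  existT (fun c' : CC n => comp_space R (val c')) (bc_index c)
    (\pi_(comp_space R (val (bc_index c))) (bc_vector (repr x))).

Definition proper_map (X Y : topologicalType) (f : X -> Y) : Prop :=
  forall K : set Y, compact K -> compact (f @^-1` K).

(* Main.v *)
Require Import Defs.
From HB Require Import structures.
From mathcomp Require Import all_boot all_order all_algebra all_fingroup.
From mathcomp Require Import all_classical all_reals all_analysis.
From mathcomp Require Import generic_quotient.
From mathcomp Require Import unstable.
Set Implicit Arguments. Unset Strict Implicit. Unset Printing Implicit Defensive.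
Import Order.TTheory GRing.Theory Num.Theory.
Import numFieldNormedType.Exports.
Local Open Scope classical_set_scope.
Local Open Scope ring_scope.
Local Open Scope quotient_scope.
Section Norms.
Variable R : realType.

Lemma entry_le_norm k (v : 'rV[R]_k) i : `|v ord0 i| <= `|v|.
Proof.
rewrite [X in _ <= X]/Num.norm /= mx_normrE.
exact: (le_trans _ (le_bigmax _ _ (ord0, i))).
Qed.

Lemma norm_le k (v : 'rV[R]_k) M : 0 <= M -> (forall i, `|v ord0 i| <= M) -> `|v| <= M.
Proof.
move=> M0 H; rewrite [X in X <= _]/Num.norm /= mx_normrE.
by apply: bigmax_le => // -[i j] _; rewrite (ord1 i).
Qed.

Lemma cball_compact k (M : R) : compact [set v : 'rV[R]_k | `|v| <= M].
Proof.
apply: bounded_closed_compact.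
  exists M; split; first exact: num_real.
  by move=> x Mx v /= vM; exact: le_trans vM (ltW Mx).
rewrite (_ : [set v | `|v| <= M] = (Num.norm : 'rV[R]_k -> R) @^-1` [set x | x <= M]) //.
apply: preimage_closed; last exact: closed_le.
by move=> x _; exact: norm_continuous.
Qed.
End Norms.

Section Q.
Variables (R : realType) (L : eqType) (ls : seq L).
Local Notation m := (size ls).
Local Notation Q := (comp_space R ls).
Local Notation pi := (\pi_Q : 'rV[R]_m -> Q).
Local Notation orb := (@orbit_rel R L ls).
Local Notation pact := (@perm_act R L ls).

Lemma piE (a b : 'rV[R]_m) : (pi a = pi b) <-> orb a b.
Proof. by split; [move/eqmodP | move=> h; apply/eqmodP]. Qed.

Lemma norm_pact s v : `|pact s v| = `|v|.
Proof.
apply/le_anti/andP; split.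
  apply: norm_le => // i; rewrite mxE; exact: entry_le_norm.
apply: norm_le => // i.
have -> : v ord0 i = pact s v ord0 (s^-1 i)%g by rewrite mxE permKV.
exact: entry_le_norm.
Qed.

Lemma pactB s a b : pact s (a - b) = pact s a - pact s b.
Proof. by apply/matrixP => i j; rewrite !mxE. Qed.

Lemma pact_cont s : continuous (pact s).
Proof.
move=> x; apply/(@cvg_ballP _ _ _ (nbhs x) (nbhs_filter x)) => e e0.
apply/nbhs_ballP; exists e => //= y.
by rewrite !mx_norm_ball /ball_ /= -pactB norm_pact.
Qed.

Lemma norm_orb a b : orb a b -> `|a| = `|b|.
Proof. by case/existsP => s /andP[_ /eqP ->]; rewrite norm_pact. Qed.

Lemma pi_open (U : set 'rV[R]_m) : open U -> open (pi @` U).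
Proof.
move=> oU; rewrite /open /= /quotient_open.
rewrite (_ : _ @^-1` _ = \bigcup_(s in [set s | @stab L ls s]) (pact s @^-1` U)).
  apply: bigcup_open => s _; apply: open_comp => // y _; exact: pact_cont.
apply/seteqP; split => y /=.
  case=> u Uu /piE; rewrite orbit_rel_sym => /existsP [s /andP[st /eqP eu]].
  by exists s => //=; rewrite -eu.
case=> s /= st Us; exists (pact s y) => //; apply/piE; rewrite orbit_rel_sym.
by apply/existsP; exists s; rewrite st eqxx.
Qed.

Lemma Q_hausdorff : hausdorff_space Q.
Proof.
rewrite open_hausdorff => x y xy.
set a := repr x; set b := repr y.
have nab : forall s, @stab L ls s -> b != pact s a.
  move=> s st; apply/negP => /eqP bs; move/negP: xy; apply.
  rewrite -[x]reprK -[y]reprK; apply/eqP/piE; apply/existsP; exists s.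
  by rewrite st -/a -/b bs eqxx.
pose d s := `|b - pact s a|.
pose e := \big[Num.min/1]_(s | @stab L ls s) d s.
have e0 : 0 < e.
  apply: lt_bigmin => // s st; rewrite normr_gt0 subr_eq0; exact: nab.
have eds : forall s, @stab L ls s -> e <= d s.
  by move=> s st; exact: bigmin_le_cond.
exists (pi @` ball a (e / 2), pi @` ball b (e / 2)); split => /=.
- by rewrite inE; exists a; [apply: ballxx; rewrite divr_gt0 | rewrite /a reprK].
- by rewrite inE; exists b; [apply: ballxx; rewrite divr_gt0 | rewrite /b reprK].
- exact/pi_open/ball_open.
- exact/pi_open/ball_open.
- apply/eqP; apply/seteqP; split => // z /= [[a' aa' <-] [b' bb' /piE]].
  rewrite orbit_rel_sym => /existsP [s /andP[st /eqP eb]].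
  move: aa' bb'; rewrite !mx_norm_ball /ball_ /= => aa' bb'.
  have := eds s st; rewrite /d; apply/negP; rewrite -ltNge.
  have -> : b - pact s a = (b - b') + pact s (a' - a) by by rewrite pactB eb addrA subrK.
  rewrite (le_lt_trans (ler_normD _ _)) // norm_pact (splitr e) (distrC a').
  exact: ltrD.
Qed.

Lemma Q_lc : locally_compact [set: Q].
Proof.
move=> x _; rewrite withinET.
pose a := repr x.
pose C := [set v : 'rV[R]_m | `|v| <= 1].
pose tr := fun w : 'rV[R]_m => w + a.
have trc : continuous tr.
  move=> w; apply/(@cvg_ballP _ _ _ (nbhs w) (nbhs_filter w)) => e e0.
  apply/nbhs_ballP; exists e => //= y.
  by rewrite !mx_norm_ball /ball_ /= /tr opprD addrACA subrr addr0.
have cp : compact (pi @` (tr @` C)).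
  apply: continuous_compact; first exact/continuous_subspaceT/pi_continuous.
  apply: continuous_compact; [exact/continuous_subspaceT | exact: cball_compact].
exists (pi @` (tr @` C)); last by split => //; exact: compact_closed (@Q_hausdorff) cp.
apply: (@filterS _ _ _ (pi @` ball a 1)).
  move=> z [v av <-]; exists v => //; exists (v - a); last by rewrite /tr subrK.
  by move: av; rewrite mx_norm_ball /ball_ /C /= distrC => /ltW.
apply: open_nbhs_nbhs; split; first exact/pi_open/ball_open.
by exists a; [exact: ballxx | exact: reprK].
Qed.

Definition qnorm (x : Q) : R := `|repr x|.

Lemma qnormE a : qnorm (pi a) = `|a|.
Proof. by apply: norm_orb; apply/piE; rewrite reprK. Qed.

Lemma qnorm_cont : continuous qnorm.
Proof.
apply: (@repr_comp_continuous _ _ _ (Num.norm : 'rV[R]_m -> R)).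
  by move=> v; exact: norm_continuous.
by move=> a b /eqP /piE /norm_orb ->.
Qed.
End Q.

Section S.
Context {I : choiceType} {X : I -> topologicalType}.

Lemma sig_hausdorff : (forall i, hausdorff_space (X i)) -> hausdorff_space {i & X i}.
Proof.
move=> hX; rewrite open_hausdorff => -[i x] [j y] pq.
have [eij|nij] := eqVneq i j.
  subst j.
  have xy : x != y by apply: contraNneq pq => ->.
  move: (hX i); rewrite open_hausdorff => /(_ x y xy) [[U V] /= [xU yV] [oU oV /eqP UV]].
  exists (existT X i @` U, existT X i @` V) => /=.
    by split; rewrite inE; [exists x => //; move: xU; rewrite inE | exists y => //; move: yV; rewrite inE].
  split; [exact: existT_open_map | exact: existT_open_map |].
  apply/eqP/seteqP; split => // z [[u Uu <-] [v Vv ev]].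
  have e := existT_inj2 ev.
  have : (U `&` V) u by split => //; rewrite -e.
  by rewrite UV.
exists (existT X i @` setT, existT X j @` setT) => /=.
  by split; rewrite inE; [exists x | exists y].
split; [apply: existT_open_map; exact: openT | apply: existT_open_map; exact: openT |].
apply/eqP/seteqP; split => // z [[u _ <-] [v _ ev]].
have e := existT_inj1 ev.
by move/eqP: nij; rewrite e.
Qed.

Lemma sig_lc : (forall i, hausdorff_space (X i)) -> (forall i, locally_compact [set: X i]) ->
  locally_compact [set: {i & X i}].
Proof.
move=> hX lX [i x] _; rewrite withinET.
have [U] := lX i x Logic.I; rewrite withinET => nU [cU _].
have cU' : compact (existT X i @` U).
  apply: continuous_compact => //; exact/continuous_subspaceT/existT_continuous.
exists (existT X i @` U); first exact: existT_nbhs.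
by split => //; apply: compact_closed cU'; exact: sig_hausdorff.
Qed.
End S.
Definition vals (R : realType) k (t : 'rV[R]_k) : seq R := [seq t ord0 i | i <- enum 'I_k].

Lemma size_vals (R : realType) k (t : 'rV[R]_k) : size (vals t) = k.
Proof. by rewrite /vals size_map size_enum_ord. Qed.

Section Orb.
Variables (R : realType) (L : eqType) (ls : seq L).
Local Notation m := (size ls).
Local Notation orb := (@orbit_rel R L ls).
Local Notation pact := (@perm_act R L ls).

Lemma zipE (t : 'rV[R]_m) : zip ls (vals t) = [seq (@lab L ls i, t ord0 i) | i <- enum 'I_m].
Proof.
rewrite -zip_map /vals; congr zip.
by rewrite /lab; symmetry; exact: (map_tnth_enum (in_tuple ls)).
Qed.

Lemma orb_perm (t t' : 'rV[R]_m) : orb t t' <-> perm_eq (zip ls (vals t)) (zip ls (vals t')).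
Proof.
pose T := [tuple (@lab L ls i, t ord0 i) | i < m].
have TE : zip ls (vals t) = T by rewrite zipE.
split.
  case/existsP => s /andP[/forallP st /eqP ->]; rewrite perm_sym TE.
  apply/tuple_permP; exists s; rewrite zipE /=; apply: eq_map => i.
  by rewrite tnth_mktuple mxE (eqP (st i)).
rewrite perm_sym TE => /tuple_permP [p]; rewrite zipE /= => /eq_in_map E.
apply/existsP; exists p; apply/andP; split.
  apply/forallP => i; have := E i (mem_enum _ i); rewrite tnth_mktuple.
  by case => -> _.
apply/eqP/matrixP => i j; rewrite (ord1 i) mxE.
by have := E j (mem_enum _ j); rewrite tnth_mktuple; case.
Qed.
End Orb.

Definition hraw (V : Type) (p : (nat + bool) * V) : seq (int * V) :=
  match p.1 with
  | inl k => [:: (Posz k.-1, p.2); (- Posz k.-1, p.2)]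
  | inr _ => [:: (0%Z, p.2)]
  end.

Definition rawg (V : Type) (a : seq nat) (ts : seq V) : seq (int * V) :=
  flatten [seq [:: (Posz kt.1.-1, kt.2); (- Posz kt.1.-1, kt.2)] | kt <- zip a ts]
  ++ [seq (0%Z, x) | x <- drop (size a) ts].

Lemma rawE2 (V : Type) (b : seq bool) (ts : seq V) : size ts = size b ->
  [seq (0%Z, x) | x <- ts] = flatten (map (@hraw V) (zip (map inr b) ts)).
Proof. by elim: b ts => [|x b IH] [|v ts] //= [e]; rewrite IH. Qed.

Lemma rawE (V : Type) (a : seq nat) (b : seq bool) (ts : seq V) :
  size ts = (size a + size b)%N ->
  rawg a ts = flatten (map (@hraw V) (zip (map inl a ++ map inr b) ts)).
Proof.
rewrite /rawg; elim: a ts => [|k a IH] [|v ts] //=.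
- by case: b.
- by move=> e; exact: (@rawE2 V b (v :: ts) e).
- by move=> [e]; rewrite -IH.
Qed.

Lemma rawg_map (V W : Type) (f : V -> W) (a : seq nat) (ts : seq V) :
  rawg a (map f ts) = map (fun p => (p.1, f p.2)) (rawg a ts).
Proof.
rewrite /rawg; elim: a ts => [|k a IH] [|v ts] //=.
all: try by rewrite ?drop0 -?map_comp.
all: by rewrite IH.
Qed.

Lemma map_fst_rawg (V : Type) (a : seq nat) (ts : seq V) (nb : nat) :
  size ts = (size a + nb)%N ->
  map fst (rawg a ts) = flatten [seq [:: Posz k.-1; - Posz k.-1] | k <- a] ++ nseq nb 0%Z.
Proof.
rewrite /rawg; elim: a ts => [|k a IH] [|v ts] //= e.
- by rewrite add0n in e; rewrite -e.
- by rewrite add0n in e; rewrite -e /=; congr (_ :: _); elim: ts {e} => //= w ts ->.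
- by rewrite (IH ts) //; move: e; rewrite addSn => -[].
Qed.

Lemma mem_rawg (V : eqType) (l : seq (nat + bool)) (ts : seq V) v :
  size l = size ts -> v \in ts -> v \in map snd (flatten (map (@hraw V) (zip l ts))).
Proof.
elim: l ts => [|x l IH] [|w ts] //= [e]; rewrite in_cons => /orP [/eqP ->|/(IH _ e) H].
  by rewrite map_cat mem_cat; case: x => [k|b] /=; rewrite in_cons eqxx.
by rewrite map_cat mem_cat H orbT.
Qed.

Section BCc.
Variables (R : realType) (n : nat) (c : CR n).
Local Notation c0 := (val c).
Local Notation N := (size (labR c0)).
Local Notation N' := (size (val (bc_index c))).
Local Notation key := (fun p q : int * R => le_int p.1 q.1).

Definition rawv (t : 'rV[R]_N) := rawg c0.1 (vals t).
Definition srtv (t : 'rV[R]_N) := sort key (rawv t).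

Lemma bc_vectorE t : bc_vector t = \row_j nth 0 (map snd (srtv t)) j.
Proof. by []. Qed.

Lemma size_labR : N = (size c0.1 + size c0.2)%N.
Proof. by rewrite /labR size_cat !size_map. Qed.

Lemma map_fst_srt t : map fst (srtv t) = val (bc_index c).
Proof.
rewrite /srtv.
have -> : key = relpre fst le_int by [].
rewrite -sort_map /rawv (map_fst_rawg (nb := size c0.2)) //.
by rewrite size_vals size_labR.
Qed.

Lemma size_srt t : size (srtv t) = N'.
Proof. by rewrite -(size_map fst) map_fst_srt. Qed.

Lemma vals_bc t : vals (bc_vector t) = map snd (srtv t).
Proof.
rewrite /vals; under eq_map => j do rewrite mxE.
rewrite (map_comp (nth 0 (map snd (srtv t))) val) val_enum_ord.
have e : size (\val (bc_index c)) = size (map snd (srtv t)) by rewrite size_map size_srt.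
by rewrite e; exact: mkseq_nth.
Qed.

Lemma bc_entry (j : 'I_N') : exists i : 'I_N, forall t : 'rV[R]_N, bc_vector t ord0 j = t ord0 i.
Proof.
pose sI := sort (fun p q : int * 'I_N => le_int p.1 q.1) (rawg c0.1 (enum 'I_N)).
have E : forall t, srtv t = map (fun p => (p.1, t ord0 p.2)) sI.
  by move=> t; rewrite /srtv /rawv /vals rawg_map sort_map.
have sz : size sI = N' by have := size_srt 0; rewrite E size_map.
have [p0 _] : exists p0 : int * 'I_N, true.
  move: sz; case: (sI) => [|p s] sz; last by exists p.
  by have := ltn_ord j; move: (nat_of_ord j) => jj; rewrite -sz.
exists (nth p0 sI j).2 => t; rewrite bc_vectorE mxE E -map_comp (nth_map p0) //= sz.
by [].
Qed.

Lemma bc_lip (t t' : 'rV[R]_N) : `|bc_vector t - bc_vector t'| <= `|t - t'|.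
Proof.
apply: norm_le => // j; have [i Hi] := bc_entry j.
have := entry_le_norm (t - t') i.
rewrite [in X in _ -> X]mxE [(- bc_vector _) _ _]mxE !Hi.
by rewrite !mxE.
Qed.

Lemma bc_cont : continuous (@bc_vector R n c).
Proof.
move=> x; apply/(@cvg_ballP _ _ _ (nbhs x) (nbhs_filter x)) => e e0.
apply/nbhs_ballP; exists e => //= y.
rewrite !mx_norm_ball /ball_ /=; apply: le_lt_trans; exact: bc_lip.
Qed.

Lemma zip_bc (t : 'rV[R]_N) : zip (val (bc_index c)) (vals (bc_vector t)) = srtv t.
Proof. by rewrite vals_bc -[in LHS](map_fst_srt t) zip_unzip. Qed.

Lemma raw_perm (t t' : 'rV[R]_N) : perm_eq (zip (labR c0) (vals t)) (zip (labR c0) (vals t')) ->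
  perm_eq (rawv t) (rawv t').
Proof.
move=> P; rewrite /rawv !(rawE (b := c0.2)) ?size_vals ?size_labR //.
exact: perm_flatten (perm_map _ P).
Qed.

Lemma bc_orb (t t' : 'rV[R]_N) : orbit_rel t t' -> orbit_rel (bc_vector t) (bc_vector t').
Proof.
move/orb_perm/raw_perm => P; apply/orb_perm.
by rewrite !zip_bc /srtv perm_sort perm_sym perm_sort perm_sym.
Qed.

Lemma norm_bc (t : 'rV[R]_N) : `|t| <= `|bc_vector t|.
Proof.
apply: norm_le => // i.
have : t ord0 i \in vals (bc_vector t).
  rewrite vals_bc /srtv (perm_mem (perm_map snd (permEl (perm_sort _ _)))).
  rewrite /rawv (rawE (b := c0.2)) ?size_vals ?size_labR //.
  apply: mem_rawg; first by rewrite size_vals.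
  exact: (map_f _ (mem_enum _ i)).
by rewrite {1}/vals => /mapP [j _ ->]; exact: entry_le_norm.
Qed.
End BCc.
Lemma sorted_bool (l : seq bool) : sorted le_bool l ->
  l = nseq (size l - count id l) false ++ nseq (count id l) true.
Proof.
elim: l => [|b l IH] //= Hs.
have Hl := path_sorted Hs.
case: b Hs => Hs /=.
  have Al : all (pred1 true) l.
    have := order_path_min (fun a b c (h1 : le_bool b a) (h2 : le_bool a c) => leq_trans h1 h2) Hs.
    by apply: sub_all => x; case: x.
  have cl : count id l = size l.
    by move/all_pred1P: Al => El; rewrite El count_nseq size_nseq mul1n.
  by rewrite cl add1n subSS subnn /=; congr (_ :: _); apply/all_pred1P.
rewrite add0n subSn ?count_size //=; congr (_ :: _); exact: IH.
Qed.

Lemma filter_pos_bc n (c : seq nat * seq bool) : CR_pred n c ->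
  seq.filter (fun z : int => (0 < z)%R) (bc_labels c) = map (fun k => Posz k.-1) c.1.
Proof.
case/and4P => a2 s1 _ _.
rewrite /bc_labels filter_sort; last 2 first.
- by move=> x y; exact: le_total.
- by move=> x y z; exact: le_trans.
rewrite filter_cat filter_nseq /= cats0.
have -> : seq.filter (fun z : int => (0 < z)%R) (flatten [seq [:: Posz k.-1; - Posz k.-1] | k <- c.1])
    = map (fun k => Posz k.-1) c.1.
  elim: (c.1) a2 => //= k s IH /andP [k2 a2].
  have k1 : (0 < k.-1)%N by case: k k2 => [|[|k]].
  rewrite ltz_nat k1 /= IH //.
  by rewrite oppr_gt0 ltNge (_ : (0 <= Posz k.-1)%R).
apply: (@sorted_sort _ le_int); first by move=> x y z; exact: le_trans.
rewrite sorted_map; apply: sub_sorted s1 => x y /= h.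
by rewrite /le_int lez_nat; case: x h => [|x] //=; case: y => [|y] //.
Qed.

Lemma count0_bc n (c : seq nat * seq bool) : CR_pred n c ->
  count (fun z : int => z == 0) (bc_labels c) = size c.2.
Proof.
case/and4P => a2 _ _ _.
rewrite /bc_labels (seq.permP (permEl (perm_sort _ _))) count_cat count_nseq /= mul1n.
suff -> : count (fun z : int => z == 0) (flatten [seq [:: Posz k.-1; - Posz k.-1] | k <- c.1]) = 0%N by [].
elim: (c.1) a2 => //= k s IH /andP [k2 a2].
have k1 : (0 < k.-1)%N by case: k k2 => [|[|k]].
rewrite IH // oppr_eq0 eqz_nat; by case: (k.-1) k1.
Qed.

Lemma bc_labels_inj n (c1 c2 : seq nat * seq bool) : CR_pred n c1 -> CR_pred n c2 ->
  bc_labels c1 = bc_labels c2 -> count id c1.2 = count id c2.2 -> c1 = c2.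
Proof.
move=> h1 h2 e ce.
have [a1 _ _ _] := and4P h1; have [a2 _ _ _] := and4P h2.
have e1 : c1.1 = c2.1.
  have := filter_pos_bc h1; rewrite e (filter_pos_bc h2) => /(congr1 (map (fun z : int => (absz z).+1))).
  rewrite -!map_comp !map_id_in //.
    by move=> k /(allP a1) /= k2; case: k k2.
  by move=> k /(allP a2) /= k2; case: k k2.
have e2 : size c1.2 = size c2.2 by rewrite -(count0_bc h1) -(count0_bc h2) e.
have e3 : c1.2 = c2.2.
  case/and4P: h1 => _ _ /sorted_bool -> _; case/and4P: h2 => _ _ /sorted_bool -> _.
  by rewrite e2 ce.
by case: c1 c2 e1 e3 {h1 h2 e ce e2 a1 a2} => a b [a' b'] /= -> ->.
Qed.

Lemma fin_union_compact (T : topologicalType) (I : eqType) (s : seq I) (F : I -> set T) :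
  (forall i, i \in s -> compact (F i)) -> compact (\bigcup_(i in [set i | i \in s]) F i).
Proof.
elim: s => [|i s IH] H.
  rewrite (_ : \bigcup_(i in [set i | i \in [::]]) F i = set0); first exact: compact0.
  by apply/seteqP; split => // x [j].
rewrite (_ : \bigcup_(j in [set j | j \in i :: s]) F j = F i `|` \bigcup_(j in [set j | j \in s]) F j).
  apply: compactU; first by apply: H; rewrite in_cons eqxx.
  by apply: IH => j js; apply: H; rewrite in_cons js orbT.
apply/seteqP; split => x.
  case=> j /=; rewrite in_cons => /orP [/eqP -> Fx|js Fx]; first by left.
  by right; exists j.
case=> [Fx|[j js Fx]]; first by exists i => //=; rewrite in_cons eqxx.
by exists j => //=; rewrite in_cons js orbT.
Qed.

Lemma subsing_union_compact (T : topologicalType) (I : Type) (P : set I) (F : I -> set T) :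
  (forall a b, P a -> P b -> a = b) -> (forall a, P a -> compact (F a)) ->
  compact (\bigcup_(i in P) F i).
Proof.
move=> sub cF.
case: (pselect (exists a, P a)) => [[a Pa]|nP].
  rewrite (_ : \bigcup_(i in P) F i = F a); first exact: cF.
  apply/seteqP; split => [x [b Pb]|x Fx]; last by exists a.
  by rewrite (sub _ _ Pb Pa).
rewrite (_ : \bigcup_(i in P) F i = set0); first exact: compact0.
by apply/seteqP; split => // x [b Pb]; case: nP; exists b.
Qed.

Definition pTempC (R : realType) (n : nat) (p : TempC R n) : Type := TempC R n.
HB.instance Definition _ (R : realType) (n : nat) (p : TempC R n) :=
  Topological.copy (pTempC p) (TempC R n).
HB.instance Definition _ (R : realType) (n : nat) (p : TempC R n) :=
  isPointed.Build (pTempC p) p.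

Section Main.
Variables (R : realType) (n : nat).

Definition gc (c : CR n) (x : comp_space R (labR (val c))) : comp_space R (val (bc_index c)) :=
  \pi_(comp_space R (val (bc_index c))) (bc_vector (repr x)).

Lemma BCE c x : BC (existT _ c x) = existT _ (bc_index c) (@gc c x).
Proof. by []. Qed.

Lemma gc_cont c : continuous (@gc c).
Proof.
apply: (@repr_comp_continuous _ _ _
  (fun t => \pi_(comp_space R (val (bc_index c))) (bc_vector t))).
  move=> t; apply: continuous_comp; [exact: bc_cont | exact: pi_continuous].
by move=> a b /eqP /piE /bc_orb H; apply/eqP/piE.
Qed.

Lemma BC_cont : continuous (@BC R n).
Proof.
have -> : @BC R n = sigT_fun (fun c x => existT _ (bc_index c) (@gc c x)).
  by apply/funext => -[c x].
apply: sigT_continuous => c x; apply: continuous_comp; [exact: gc_cont | exact: existT_continuous].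
Qed.

Lemma TempR_h : hausdorff_space (TempR R n).
Proof. by apply: sig_hausdorff => c; exact: Q_hausdorff. Qed.
Lemma TempC_h : hausdorff_space (TempC R n).
Proof. by apply: sig_hausdorff => c; exact: Q_hausdorff. Qed.
Lemma TempR_lc : locally_compact [set: TempR R n].
Proof. by apply: sig_lc => c; [exact: Q_hausdorff | exact: Q_lc]. Qed.
Lemma TempC_lc : locally_compact [set: TempC R n].
Proof. by apply: sig_lc => c; [exact: Q_hausdorff | exact: Q_lc]. Qed.

Lemma BC_proper : proper_map (@BC R n).
Proof.
move=> K cK.
have clK := compact_closed TempC_h cK.
have clP : closed (@BC R n @^-1` K).
  by apply: preimage_closed => // x _; exact: BC_cont.
pose nC := sigT_fun (fun c' (z : comp_space R (val c')) => qnorm z) : TempC R n -> R.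
have nCc : continuous nC by apply: sigT_continuous => c'; exact: qnorm_cont.
have [M HM] : exists M, forall p, K p -> nC p <= M.
  have := compact_bounded (continuous_compact (continuous_subspaceT nCc) cK).
  case=> M0 [_ HM0]; exists (M0 + 1) => p Kp.
  have ltrDl_subproof : forall r : R, r < r + 1 by move=> r; rewrite ltrDl.
  have := HM0 (M0 + 1) (ltrDl_subproof M0) (nC p) (ex_intro2 _ _ p Kp erefl).
  by apply: le_trans; exact: ler_norm.
case: (pselect (exists p, K p)) => [[p0 Kp0]|nK]; last first.
  rewrite (_ : _ @^-1` K = set0); first exact: compact0.
  by apply/seteqP; split => // x Kx; apply: nK; exists (BC x).
have cvK : @cover_compact (pTempC p0) K.
  by have : @compact (pTempC p0) K := cK; rewrite compact_cover.
move: cvK => /(_ (CC n) setT (fun c' => existT _ c' @` setT)).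
case.
- by move=> c' _; apply: existT_open_map; exact: openT.
- by move=> [c' z] _; exists c' => //; exists z.
move=> D' _ KD'.
pose Fib (c' : CC n) (j : nat) := [set c : CR n | bc_index c = c' /\ count id (val c).2 = j].
pose B (c : CR n) := existT (fun c => comp_space R (labR (val c))) c @`
  (\pi_(comp_space R (labR (val c))) @` [set t | `|t| <= M]).
apply: (@subclosed_compact _ _
  (\bigcup_(c' in [set c' | c' \in finmap.enum_fset D']) \bigcup_(j in [set j | j \in iota 0 n.+1])
     \bigcup_(c in Fib c' j) B c) clP).
  apply: fin_union_compact => c' _; apply: fin_union_compact => j _.
  apply: subsing_union_compact.
    move=> a b [ea ja] [eb jb]; apply: val_inj.
    apply: (bc_labels_inj (valP a) (valP b)); last by rewrite ja jb.
    by rewrite -[bc_labels _]/(val (bc_index a)) -[bc_labels (val b)]/(val (bc_index b)) ea eb.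
  move=> c _; apply: continuous_compact; first exact/continuous_subspaceT/existT_continuous.
  apply: continuous_compact; first exact/continuous_subspaceT/pi_continuous.
  exact: cball_compact.
move=> [c x] /= Kp.
have [c' Dc' [z _ ez]] := KD' _ Kp.
have ec : c' = bc_index c := existT_inj1 ez.
exists c' => //; exists (count id (val c).2).
  change (count id (val c).2 \in iota 0 n.+1); rewrite mem_iota add0n ltnS; apply: leq_trans (count_size _ _) _.
  case/and4P: (valP c) => _ _ _ e; apply: leq_trans (leq_addl ((size (val c).1).*2) _) _; by rewrite (eqP e).
exists c => //; exists (\pi_(comp_space R (labR (val c))) (repr x)); last by rewrite reprK.
exists (repr x) => //=.
apply: le_trans (norm_bc (repr x)) _.
rewrite -qnormE; exact: HM Kp.
Qed.
End Main.

Theorem proposition6p1 (R : realType) (n : nat) : (1 <= n)%N ->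
  (continuous (@BC R n) /\ proper_map (@BC R n)) /\
  (locally_compact [set: TempR R n] /\ hausdorff_space (TempR R n)) /\
  (locally_compact [set: TempC R n] /\ hausdorff_space (TempC R n)).
Proof.
move=> _; split; first by split; [exact: BC_cont | exact: BC_proper].
by split; split; [exact: TempR_lc | exact: TempR_h | exact: TempC_lc | exact: TempC_h].
Qed.
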